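(* For every integer $t\ge 1$, with $v=4t+1$, the $(v,2,1)$-BIBD on a $v$-set $X$ (whose blocks are all $2$-subsets of $X$) has a strong nesting $\phi:\mathcal{A}\to Y$ with $X\subseteq Y$ and $|Y|=w=6t+2$, and this is optimal: no strong nesting of this BIBD has $|Y|<6t+2$.
   Context: A $(v,k,\lambda)$-BIBD is a pair $(X,\mathcal{A})$ where $X$ is a set of $v$ points and $\mathcal{A}$ is a multiset of $k$-subsets of $X$ (blocks) such that every pair of distinct points lies in exactly $\lambda$ blocks. Given a $(v,k,\lambda)$-BIBD $(X,\mathcal{A})$ and a set $Y\supseteq X$ with $|Y|=w$, a map $\phi:\mathcal{A}\to Y$ is a strong nesting if (1) $\phi(A)\notin A$ for every block $A\in\mathcal{A}$, and (2) the multiset of pairs $\{\{x,\phi(A)\}: A\in\mathcal{A},\ x\in A\}$ (one pair for each block $A$, counted with multiplicity in $\mathcal{A}$, and each $x\in A$) consists of distinct pairs. A strong nesting is optimal if $w=|Y|$ is as small as possible. *)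

(* Defs.v *)
From mathcomp Require Import all_boot.
Set Implicit Arguments. Unset Strict Implicit. Unset Printing Implicit Defensive.

Definition complete_blocks (X : finType) : {set {set X}} :=
  [set A : {set X} | #|A| == 2].

Definition strong_nesting (X Y : finType) (iota : X -> Y)
    (blocks : {set {set X}}) (phi : {set X} -> Y) : Prop :=
  (forall A, A \in blocks -> forall x, x \in A -> phi A != iota x) /\
  (forall A B x y, A \in blocks -> B \in blocks -> x \in A -> y \in B ->
     [set iota x; phi A] = [set iota y; phi B] -> A = B /\ x = y).

(* Main.v *)
Require Import Defs.
From mathcomp Require Import all_boot.
From mathcomp Require Import zify.
Set Implicit Arguments. Unset Strict Implicit. Unset Printing Implicit Defensive.

Definition Fn (t p q : nat) : nat :=
  if q == 4*t then (if p + t < 4*t then p + t else p + t - 4*t) else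
  let dl := q - p in
  if dl == 2*t then 4*t+1 else
  let x := if dl < 2*t then p else q in
  let d := if dl < 2*t then dl else 4*t - dl in
  let y := x + (t + d./2) in
  if ~~ odd d then (if y < 4*t then y else y - 4*t)
  else 4*t + 2 + (if y < 2*t then y else if y < 4*t then y - 2*t else y - 4*t).

Definition D' (t a b : nat) : nat * nat * nat :=
 if b == 4*t+1 then (if a < 2*t then (a, a+2*t, a) else (a-2*t, a, a))
 else if 4*t+2 <= b then
   (let j := b - (4*t+2) in let dd := j + 4*t - a in
    let de := if dd < 2*t then dd else if dd < 4*t then dd - 2*t else dd - 4*t in
    if t <= de then (let d := 2*(de-t)+1 in if a + d < 4*t then (a, a+d, a) else (a+d-4*t, a, a))
    else (let d := 2*(t-de) - 1 in if d <= a then (a-d, a, a) else (a, a+4*t-d, a)))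
 else if b == 4*t then (if t <= a then (a-t, 4*t, 4*t) else (a+4*t-t, 4*t, 4*t))
 else let c := b - a in
   let x := if c <= 4*t - c then a else b in
   let cp := if c <= 4*t - c then c else 4*t - c in
   if cp == t then (x, 4*t, x)
   else if t < cp then (let d := 2*(cp-t) in if x + d < 4*t then (x, x+d, x) else (x+d-4*t, x, x))
   else (let d := 2*(t-cp) in if d <= x then (x-d, x, x) else (x, x+4*t-d, x)).

Definition Dn t u v := if u < v then D' t u v else D' t v u.

Ltac split_ifs :=
  repeat match goal with |- context[if ?b then _ else _] =>
    lazymatch b with context[if _ then _ else _] => fail | _ => 
    let H := fresh "H" in destruct b eqn:H end end.

Lemma Fn_ok t p q : 0 < t -> p < q <= 4*t ->
  Fn t p q < 6*t+2 /\ Fn t p q != p /\ Fn t p q != q.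
Proof.
move=> ht hpq. rewrite /Fn; cbv zeta. split_ifs; lia.
Qed.

Ltac split_ifs2 :=
  repeat match goal with |- context[if ?b then _ else _] =>
    lazymatch b with context[if _ then _ else _] => fail | _ => 
    let H := fresh "H" in destruct b eqn:H; try (exfalso; lia) end end.
Lemma Dn_pl t p q : 0 < t -> p < q <= 4*t ->
  Dn t p (Fn t p q) = (p, q, p).
Proof.
move=> ht hpq. rewrite /Dn /D' /Fn; cbv zeta. split_ifs2; try (congr (_,_,_); lia).
Qed.
Lemma Dn_pr t p q : 0 < t -> p < q <= 4*t ->
  Dn t (Fn t p q) p = (p, q, p).
Proof.
move=> ht hpq. rewrite /Dn /D' /Fn; cbv zeta. split_ifs2; try (congr (_,_,_); lia).
Qed.
Lemma Dn_ql t p q : 0 < t -> p < q <= 4*t ->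
  Dn t q (Fn t p q) = (p, q, q).
Proof.
move=> ht hpq. rewrite /Dn /D' /Fn; cbv zeta. split_ifs2; try (congr (_,_,_); lia).
Qed.
Lemma Dn_qr t p q : 0 < t -> p < q <= 4*t ->
  Dn t (Fn t p q) q = (p, q, q).
Proof.
move=> ht hpq. rewrite /Dn /D' /Fn; cbv zeta. split_ifs2; try (congr (_,_,_); lia).
Qed.

Lemma set2_eq (T : finType) (a b c d : T) :
  [set a; b] = [set c; d] -> (a = c /\ b = d) \/ (a = d /\ b = c).
Proof.
move=> E.
have Ha : a \in [set c; d] by rewrite -E set21.
have Hb : b \in [set c; d] by rewrite -E set22.
have Hc : c \in [set a; b] by rewrite E set21.
have Hd : d \in [set a; b] by rewrite E set22.
move: Ha Hb Hc Hd; rewrite !in_set2.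
move=> /orP[/eqP ac|/eqP ad] /orP[/eqP bc|/eqP bd] /orP[/eqP ca|/eqP cb] /orP[/eqP da|/eqP db];
  subst; auto.
Qed.

Section LB.
Variables (X Y : finType) (iota : X -> Y) (phi : {set X} -> Y).
Hypothesis iota_inj : injective iota.
Hypothesis H : strong_nesting iota (complete_blocks X) phi.

Let blocks := complete_blocks X.
Lemma blkE (A : {set X}) : (A \in complete_blocks X) = (#|A| == 2).
Proof. by rewrite inE. Qed.
Lemma H1' (A : {set X}) : #|A| == 2 -> forall x, x \in A -> phi A != iota x.
Proof. by case: H => h1 _; rewrite -blkE; apply: h1. Qed.
Lemma H2' (A B : {set X}) (x y : X) : #|A| == 2 -> #|B| == 2 -> x \in A -> y \in B ->
  [set iota x; phi A] = [set iota y; phi B] -> A = B /\ x = y.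
Proof. by case: H => _ h2; rewrite -!blkE; apply: h2. Qed.
Definition Sy (y : Y) := [set A in blocks | phi A == y].
Definition Py (y : Y) := [set p : {set X} * X | (p.1 \in Sy y) && (p.2 \in p.1)].

Lemma card_Py y : #|Py y| = 2 * #|Sy y|.
Proof.
rewrite -sum1_card.
rewrite (eq_bigl (fun p : {set X} * X => (p.1 \in Sy y) && (p.2 \in p.1))); last first.
  by move=> p; rewrite inE.
rewrite -(pair_big_dep (fun A => A \in Sy y) (fun A x => x \in A) (fun _ _ => 1)) /=.
rewrite (eq_bigr (fun _ => 2)); first by rewrite sum_nat_const mulnC.
move=> A; rewrite inE => /andP[]; rewrite inE => /eqP hA _.
by rewrite sum1_card hA.
Qed.

Lemma Py_inj y : {in Py y &, injective (fun p : {set X} * X => p.2)}.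
Proof.
move=> [A x] [B x'] /=; rewrite !inE /= => /andP[/andP[bA /eqP pA] xA] /andP[/andP[bB /eqP pB] xB] e.
subst x'. have := @H2' A B x x bA bB xA xB; rewrite pA pB => /(_ erefl) [-> _] //.
Qed.

Lemma Py_bound y : #|Py y| <= #|X|.
Proof.
rewrite -(card_in_imset (Py_inj (y:=y))). exact: max_card.
Qed.

Lemma Py_bound_im x0 : #|Py (iota x0)| + #|X|.-1 <= #|Y|.-1.
Proof.
set y := iota x0.
set Q := (fun p : {set X} * X => iota p.2) @: Py y.
set R := (fun z => phi [set x0; z]) @: [set~ x0].
have bl : forall z, z != x0 -> #|[set x0; z]| == 2.
  by move=> z hz; rewrite cards2 (eq_sym x0) hz.
have cQ : #|Q| = #|Py y|.
  apply: card_in_imset => p1 p2 h1 h2 /= e.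
  by apply: (Py_inj h1 h2); apply: iota_inj.
have cR : #|R| = #|X|.-1.
  rewrite card_in_imset ?cardsC1 // => z1 z2; rewrite !inE => h1 h2 e.
  have := @H2' _ _ x0 x0 (bl _ h1) (bl _ h2) (set21 _ _) (set21 _ _).
  rewrite e => /(_ erefl) [E _].
  have : z1 \in [set x0; z2] by rewrite -E set22.
  by rewrite in_set2 (negbTE h1) => /eqP.
have dQR : Q :&: R = set0.
  apply/setP => u; rewrite !inE; apply/negP => /andP[/imsetP[[A x]]].
  rewrite !inE /= => /andP[/andP[bA /eqP pA] xA] -> /imsetP[z]; rewrite !inE => hz e.
  have := @H2' A [set x0; z] x x0 bA (bl _ hz) xA (set21 _ _).
  rewrite -e pA setUC => /(_ erefl) [AE _].
  by move: (@H1' A bA x0); rewrite AE set21 -AE pA eqxx => /(_ erefl).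
have sub : Q :|: R \subset [set~ y].
  apply/subsetP => u; rewrite !inE => /orP[/imsetP[[A x]]|/imsetP[z]].
    rewrite !inE /= => /andP[/andP[bA /eqP pA] xA] ->.
    by rewrite -pA eq_sym; apply: H1'.
  rewrite !inE => hz ->. by apply: H1'; [apply: bl | apply: set21].
have := subset_leq_card sub.
by rewrite cardsU dQR cards0 subn0 cQ cR cardsC1.
Qed.

Lemma Sy_bound_im x0 : 2 * #|Sy (iota x0)| <= #|Y| - #|X|.
Proof. have := Py_bound_im x0; rewrite card_Py -!subn1; lia. Qed.

Lemma Sy_bound_odd y : odd #|X| -> 2 * #|Sy y| <= #|X|.-1.
Proof. have := Py_bound y; rewrite card_Py -!subn1 => h o. have: 2 * #|Sy y| != #|X|.
  by apply/negP => /eqP e; move: o; rewrite -e oddM. lia. Qed.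
End LB.

Lemma sum_Sy (X Y : finType) (phi : {set X} -> Y) :
  \sum_(y : Y) #|Sy phi y| = #|complete_blocks X|.
Proof.
rewrite -sum1_card (partition_big phi predT) //=.
apply: eq_bigr => y _; rewrite -sum1_card; apply: eq_bigl => A.
by rewrite /Sy inE.
Qed.

Lemma lower_bound (t : nat) (Y : finType) (iota : 'I_(4 * t + 1) -> Y)
      (phi : {set 'I_(4 * t + 1)} -> Y) :
  injective iota -> strong_nesting iota (complete_blocks _) phi ->
  1 <= t -> 6 * t + 2 <= #|Y|.
Proof.
move=> inj H ht.
set I := iota @: [set: 'I_(4 * t + 1)].
have cI : #|I| = 4 * t + 1 by rewrite card_imset // cardsT card_ord.
have cCI : #|~: I| = #|Y| - (4 * t + 1) by rewrite cardsCs setCK cI.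
have IY : 4 * t + 1 <= #|Y| by rewrite -cI max_card.
have bnd : forall y, 2 * #|Sy phi y| <= (if y \in I then #|Y| - (4 * t + 1) else 4 * t).
  move=> y; case: ifP => hy.
    case/imsetP: hy => x0 _ ->.
    by have := Sy_bound_im inj H x0; rewrite card_ord.
  have o : odd #|'I_(4 * t + 1)| by rewrite card_ord; lia.
  apply: (leq_trans (Sy_bound_odd H y o)).
  by rewrite card_ord addn1.
have C : #|complete_blocks 'I_(4 * t + 1)| = (4 * t + 1) * (2 * t).
  rewrite /complete_blocks card_draws card_ord bin2.
  have -> : (4 * t + 1) * (4 * t + 1).-1 = ((4 * t + 1) * (2 * t)).*2.
    rewrite -mul2n; nia.
  by rewrite doubleK.
have S : 2 * ((4 * t + 1) * (2 * t)) <= #|I| * (#|Y| - (4 * t + 1)) + #|~: I| * (4 * t).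
  rewrite -C -(sum_Sy phi) big_distrr /=.
  apply: (@leq_trans (\sum_y (if y \in I then #|Y| - (4 * t + 1) else 4 * t))); first by apply: leq_sum => y _; apply: bnd.
  rewrite (bigID (fun y => y \in I)) /=.
  rewrite (eq_bigr (fun _ => #|Y| - (4 * t + 1))); last by move=> y ->.
  rewrite [X in _ + X <= _](eq_bigr (fun _ => 4 * t)); last by move=> y /negbTE ->.
  rewrite sum_nat_const.
  have -> : \sum_(i | i \notin I) 4 * t = #|~: I| * (4 * t).
    by rewrite -sum_nat_const; apply: eq_bigl => y; rewrite inE.
  done.
move: S; rewrite cI cCI.
move: (#|Y| - (4 * t + 1)) (subnKC IY) => s hs h.
rewrite -hs; case: (leqP (2 * t + 1) s) => hst; first lia.
have : s * (8 * t + 1) <= (2 * t) * (8 * t + 1) by rewrite leq_mul2r; apply/orP; right; lia.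
nia.
Qed.

Section Constr.
Variable t : nat.
Hypothesis ht : 1 <= t.

Let le_XY : 4 * t + 1 <= 6 * t + 2. Proof. lia. Qed.
Let lt0 : 0 < 6 * t + 2. Proof. lia. Qed.
Definition iotaC : 'I_(4 * t + 1) -> 'I_(6 * t + 2) := widen_ord le_XY.
Definition d0 : 'I_(6 * t + 2) := Ordinal lt0.

Definition phiC (A : {set 'I_(4 * t + 1)}) : 'I_(6 * t + 2) :=
  match [pick pq : 'I_(4 * t + 1) * 'I_(4 * t + 1) | (pq.1 < pq.2) && (A == [set pq.1; pq.2])] with
  | Some pq => insubd d0 (Fn t pq.1 pq.2)
  | None => d0
  end.

Lemma iotaC_inj : injective iotaC.
Proof. by move=> x y /(congr1 val) /= /val_inj. Qed.

Lemma blk_decomp (A : {set 'I_(4 * t + 1)}) : #|A| == 2 ->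
  exists p q : 'I_(4 * t + 1), p < q /\ A = [set p; q].
Proof.
case/cards2P => x [y [nxy ->]].
case: (ltngtP x y) => h.
- by exists x, y.
- by exists y, x; rewrite setUC.
- by move/val_inj: h => h; rewrite h eqxx in nxy.
Qed.

Lemma phiC_val (p q : 'I_(4 * t + 1)) : p < q -> val (phiC [set p; q]) = Fn t p q.
Proof.
move=> pq; rewrite /phiC.
case: pickP => [[p' q'] /andP[/= lt /eqP E] | none]; last first.
  by move: (none (p, q)); rewrite /= pq eqxx.
case: (set2_eq E) => [[e1 e2]|[e1 e2]]; last first.
  by subst; move: (ltn_trans pq lt); rewrite ltnn.
subst => /=. rewrite insubdK //.
have hq : q' <= 4 * t by have := ltn_ord q'; lia.
by case: (Fn_ok ht (p := p') (q := q')) => //; rewrite lt hq.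
Qed.

Lemma key (A : {set 'I_(4 * t + 1)}) (x : 'I_(4 * t + 1)) : #|A| == 2 -> x \in A ->
  exists p q : 'I_(4 * t + 1), A = [set p; q] /\
   Dn t (val (iotaC x)) (val (phiC A)) = (val p, val q, val x) /\
   Dn t (val (phiC A)) (val (iotaC x)) = (val p, val q, val x).
Proof.
move=> /blk_decomp [p [q [pq ->]]] xA; exists p, q; split => //.
rewrite phiC_val //=.
have hpq : p < q <= 4 * t by rewrite pq /=; have := ltn_ord q; lia.
move: xA; rewrite in_set2 => /orP[/eqP->|/eqP->].
  by rewrite Dn_pl ?Dn_pr.
by rewrite Dn_ql ?Dn_qr.
Qed.

Lemma nestC : strong_nesting iotaC (complete_blocks _) phiC.
Proof.
split.
  move=> A; rewrite inE => /blk_decomp [p [q [pq ->]]] x xA.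
  apply/eqP => /(congr1 val); rewrite phiC_val //= => e.
  have hpq : p < q <= 4 * t by rewrite pq /=; have := ltn_ord q; lia.
  case: (Fn_ok ht hpq) => _ [n1 n2].
  by move: xA; rewrite in_set2 => /orP[/eqP ex|/eqP ex]; subst x;
     [move: n1 | move: n2]; rewrite e eqxx.
move=> A B x y; rewrite !inE => bA bB xA yB E.
case: (key bA xA) => p [q [eA [k1 k2]]].
case: (key bB yB) => p' [q' [eB [k1' k2']]].
have : (val p, val q, val x) = (val p', val q', val y).
  case: (set2_eq E) => [[e1 e2]|[e1 e2]].
    by rewrite -k1 -k1' e1 e2.
  by rewrite -k1 -k2' e1 e2.
case=> /val_inj e1 /val_inj e2 /val_inj e3.
by subst; split.
Qed.
End Constr.

Theorem theorem4p2 (t : nat) (ht : 1 <= t) :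
  (exists iota : 'I_(4 * t + 1) -> 'I_(6 * t + 2),
     injective iota /\
     exists phi : {set 'I_(4 * t + 1)} -> 'I_(6 * t + 2),
       strong_nesting iota (complete_blocks _) phi) /\
  (forall (Y : finType) (iota : 'I_(4 * t + 1) -> Y)
          (phi : {set 'I_(4 * t + 1)} -> Y),
     injective iota -> strong_nesting iota (complete_blocks _) phi ->
     6 * t + 2 <= #|Y|).
Proof.
split.
  exists (iotaC ht); split; first exact: iotaC_inj.
  by exists (phiC ht); apply: nestC.
by move=> Y iota phi inj H; apply: (lower_bound inj H).
Qed.
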